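(* Let $I$ be a squarefree monomial ideal in a polynomial ring $S$ over a field that is nearly a complete intersection (NCI), and let $F$ be a minimal monomial generator of $I$. Then $F$ has a nontrivial common factor with some other minimal monomial generator of $I$.
   Context: An ideal is a complete intersection (CI) if it is generated by a regular sequence. The support of a monomial ideal is the set of variables appearing in at least one minimal monomial generator. For a squarefree monomial ideal $I$ and a variable $x$, $I(x=1)$ denotes the ideal generated by the monomials obtained from the minimal monomial generators of $I$ by setting $x = 1$. A squarefree monomial ideal $I$ is NCI if it is generated in degree at least two, is not a CI, and for each variable $x$ in the support of $I$, $I(x=1)$ is a CI. *)

(* Defs.v *)
From mathcomp Require Import all_boot all_algebra.
From mathcomp Require Import mpoly.
Set Implicit Arguments. Unset Strict Implicit. Unset Printing Implicit Defensive.
Import GRing.Theory.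
Local Open Scope ring_scope.

Section Defs.
Variables (K : fieldType) (n : nat).

Definition mideal := {mpoly K[n]} -> Prop.

Definition ideal_span (A : {mpoly K[n]} -> Prop) : mideal :=
  fun p => exists s : seq ({mpoly K[n]} * {mpoly K[n]}),
    (forall x, x \in s -> A x.2) /\ p = \sum_(x <- s) x.1 * x.2.

Definition ideal_seq (fs : seq {mpoly K[n]}) : mideal :=
  ideal_span (fun g => g \in fs).

Definition ideal_eq (I J : mideal) : Prop := forall p, I p <-> J p.

Definition regular_seq (fs : seq {mpoly K[n]}) : Prop :=
  (forall i, (i < size fs)%N -> forall g,
     ideal_seq (take i fs) (g * nth 0 fs i) -> ideal_seq (take i fs) g)
  /\ ~ ideal_seq fs 1.

Definition is_CI (I : mideal) : Prop :=
  exists fs, regular_seq fs /\ ideal_eq I (ideal_seq fs).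

Definition squarefree_mnm (m : 'X_{1..n}) : Prop := forall i, (m i <= 1)%N.

Definition mnm_dvd (m' m : 'X_{1..n}) : Prop := forall i, (m' i <= m i)%N.

Definition mono_ideal (A : 'X_{1..n} -> Prop) : mideal :=
  ideal_span (fun g => exists m, A m /\ g = 'X_[m]).

Definition squarefree_monomial_ideal (I : mideal) : Prop :=
  exists gs : seq 'X_{1..n}, (forall m, m \in gs -> squarefree_mnm m) /\
    ideal_eq I (mono_ideal (fun m => m \in gs)).

Definition min_mono_gen (I : mideal) (m : 'X_{1..n}) : Prop :=
  I 'X_[m] /\ forall m', mnm_dvd m' m -> I 'X_[m'] -> m' = m.

Definition in_support (I : mideal) (i : 'I_n) : Prop :=
  exists m, min_mono_gen I m /\ (0 < m i)%N.

(* the monomial obtained from x^m by setting x_i = 1 *)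
Definition set1_mnm (i : 'I_n) (m : 'X_{1..n}) : 'X_{1..n} :=
  [multinom (if j == i then 0%N else m j) | j < n].

Definition ideal_set1 (I : mideal) (i : 'I_n) : mideal :=
  mono_ideal (fun m' => exists m, min_mono_gen I m /\ m' = set1_mnm i m).

Definition gen_deg_ge2 (I : mideal) : Prop :=
  forall m, min_mono_gen I m -> (2 <= mdeg m)%N.

Definition is_NCI (I : mideal) : Prop :=
  gen_deg_ge2 I /\ ~ is_CI I /\
  forall i, in_support I i -> is_CI (ideal_set1 I i).

End Defs.

(* Main.v *)
Require Import Defs.
From mathcomp Require Import all_boot all_algebra.
From mathcomp Require Import mpoly.
From mathcomp Require Import ring.
From Stdlib Require Import Classical.

Module Helpers.
Set Implicit Arguments. Unset Strict Implicit. Unset Printing Implicit Defensive.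
Import GRing.Theory.
Local Open Scope ring_scope.
Section Span.
Variables (K : fieldType) (n : nat).
Local Notation S := {mpoly K[n]}.
Implicit Types (A B : S -> Prop) (p q r g : S).

Lemma span0 A : ideal_span A 0.
Proof. by exists [::]; split => //; rewrite big_nil. Qed.

Lemma spanD A p q : ideal_span A p -> ideal_span A q -> ideal_span A (p + q).
Proof.
move=> [s1 [h1 ->]] [s2 [h2 ->]]; exists (s1 ++ s2); split; last by rewrite big_cat.
by move=> x; rewrite mem_cat => /orP [] ?; [apply: h1|apply: h2].
Qed.

Lemma spanM A r p : ideal_span A p -> ideal_span A (r * p).
Proof.
move=> [s [h ->]]; exists [seq (r * x.1, x.2) | x <- s]; split.
  by move=> x /mapP [y ys ->] /=; apply: h.
by rewrite big_map mulr_sumr; apply: eq_bigr => x _ /=; rewrite mulrA.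
Qed.

Lemma spanG A g : A g -> ideal_span A g.
Proof.
move=> hg; exists [:: (1, g)]; split; last by rewrite big_seq1 mul1r.
by move=> x; rewrite mem_seq1 => /eqP ->.
Qed.

Lemma span_sub A B p : (forall g, A g -> ideal_span B g) ->
  ideal_span A p -> ideal_span B p.
Proof.
move=> hAB [s [h ->]]; elim: s h => [|x s IH] h; first by rewrite big_nil; apply: span0.
rewrite big_cons; apply: spanD; last by apply: IH => y ys; apply: h; rewrite inE ys orbT.
by apply: spanM; apply: hAB; apply: h; rewrite inE eqxx.
Qed.

Lemma span_map A B (f : {rmorphism S -> S}) p : (forall g, A g -> B (f g)) ->
  ideal_span A p -> ideal_span B (f p).
Proof.
move=> hAB [s [h ->]]; elim: s h => [|x s IH] h; first by rewrite big_nil rmorph0; apply: span0.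
rewrite big_cons rmorphD rmorphM; apply: spanD; last by apply: IH => y ys; apply: h; rewrite inE ys orbT.
by apply: spanM; apply: spanG; apply: hAB; apply: h; rewrite inE eqxx.
Qed.

End Span.


Section Transfer.
Variables (K : fieldType) (n : nat).
Local Notation S := {mpoly K[n]}.
Variables (psi : {rmorphism S -> S}) (u : S) (c0 c1 : S -> S).
Hypothesis dec : forall g, g = psi (c0 g) + psi (c1 g) * u.
Hypothesis lin0 : forall r g, c0 (psi r * g) = r * c0 g.
Hypothesis lin1 : forall r g, c1 (psi r * g) = r * c1 g.
Hypothesis add0 : forall g h, c0 (g + h) = c0 g + c0 h.
Hypothesis add1 : forall g h, c1 (g + h) = c1 g + c1 h.
Hypothesis c01 : c0 1 = 1.

Lemma c0_0 : c0 0 = 0.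
Proof. by apply: (addrI (c0 0)); rewrite addr0 -add0 addr0. Qed.
Lemma c1_0 : c1 0 = 0.
Proof. by apply: (addrI (c1 0)); rewrite addr0 -add1 addr0. Qed.

Lemma lin0' r g : c0 (g * psi r) = r * c0 g.
Proof. by rewrite mulrC lin0. Qed.
Lemma lin1' r g : c1 (g * psi r) = r * c1 g.
Proof. by rewrite mulrC lin1. Qed.

Lemma ideal_map_iff fs g : ideal_seq (map psi fs) g <->
  ideal_seq fs (c0 g) /\ ideal_seq fs (c1 g).
Proof.
split.
  move=> [s [h ->]]; elim: s h => [|x s IH] h.
    by rewrite big_nil c0_0 c1_0; split; apply: span0.
  have [IH0 IH1] : ideal_seq fs (c0 (\sum_(x <- s) x.1 * x.2)) /\
                   ideal_seq fs (c1 (\sum_(x <- s) x.1 * x.2)).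
    by apply: IH => y ys; apply: h; rewrite inE ys orbT.
  have /mapP [f ffs hf] : x.2 \in map psi fs by apply: h; rewrite inE eqxx.
  rewrite big_cons hf add0 add1 lin0' lin1'; split; apply: spanD => //;
    rewrite mulrC; apply: spanM; exact: spanG.
move=> [h0 h1]; rewrite (dec g); apply: spanD; last rewrite mulrC; try apply: spanM;
  apply: (span_map (A := fun g => g \in fs)) => //; move=> f ff; exact: map_f.
Qed.

Lemma regular_map fs : regular_seq fs -> regular_seq (map psi fs).
Proof.
move=> [hr h1]; split; last first.
  by move/ideal_map_iff => [] /=; rewrite c01.
move=> i; rewrite size_map => hi g; rewrite -map_take (nth_map 0) //.
move=> /ideal_map_iff [H0 H1]; apply/ideal_map_iff.
by rewrite lin0' mulrC in H0; rewrite lin1' mulrC in H1; split; apply: hr.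
Qed.

End Transfer.

Section Hom.
Variables (K : fieldType) (n : nat).
Local Notation S := {mpoly K[n]}.

Lemma hom_ext (f g : {rmorphism S -> S}) :
  (forall c, f c%:MP = g c%:MP) -> (forall i, f 'X_i = g 'X_i) -> forall p, f p = g p.
Proof.
move=> hC hX; elim/mpolyind => [|c m p _ _ IH]; first by rewrite !rmorph0.
rewrite !rmorphD IH -mul_mpolyC !rmorphM hC; congr (_ * _ + _).
rewrite mpolyXE_id !rmorph_prod; apply: eq_bigr => i _; by rewrite !rmorphXn hX.
Qed.

Lemma mpolyXi_neq0 i : ('X_i : S) != 0.
Proof. by apply/eqP => /mpolyP /(_ (mnm1 i)); rewrite mcoeffXU mcoeff0 eqxx => /eqP; rewrite oner_eq0. Qed.

Lemma mpolyXi_inj i j : ('X_i : S) = 'X_j -> i = j.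
Proof.
move/mpolyP/(_ (mnm1 i)); rewrite !mcoeffXU eqxx eq_sym.
by case: eqP => // _ /eqP; rewrite oner_eq0.
Qed.

End Hom.

Section Psi.
Variables (K : fieldType) (n : nat) (a b : 'I_n).
Hypothesis hab : a != b.
Local Notation S := {mpoly K[n]}.

Definition psi_t : n.-tuple S := [tuple (if i == a then 'X_a + 'X_b
  else if i == b then 'X_a * 'X_b else 'X_i) | i < n].
Definition sig_t : n.-tuple S := [tuple (if i == a then 'X_b
  else if i == b then 'X_a else 'X_i) | i < n].
Definition tau_t : n.-tuple S := [tuple (if i == b then 0 else 'X_i) | i < n].
Local Notation psi := (comp_mpoly psi_t).
Local Notation sig := (comp_mpoly sig_t).
Local Notation tau := (comp_mpoly tau_t).

Lemma compXi (lq : n.-tuple S) i : comp_mpoly lq 'X_i = tnth lq i.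
Proof. by rewrite comp_mpolyXU (tnth_nth 0). Qed.

Lemma psiXa : psi 'X_a = 'X_a + 'X_b.
Proof. by rewrite compXi tnth_mktuple eqxx. Qed.
Lemma psiXb : psi 'X_b = 'X_a * 'X_b.
Proof. by rewrite compXi tnth_mktuple eqxx eq_sym (negbTE hab). Qed.
Lemma psiXo i : i != a -> i != b -> psi 'X_i = 'X_i.
Proof. by move=> /negbTE ha /negbTE hb; rewrite compXi tnth_mktuple ha hb. Qed.

Lemma sig_psi p : sig (psi p) = psi p.
Proof.
apply: (hom_ext (f := (sig \o psi)%FUN : {rmorphism S -> S})) => [c|i] /=.
  by rewrite !comp_mpolyC.
have hba : b != a by rewrite eq_sym.
case: (eqVneq i a) => [->|ha].
  by rewrite psiXa rmorphD /= !compXi !tnth_mktuple eqxx (negbTE hba) eqxx addrC.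
case: (eqVneq i b) => [->|hb].
  by rewrite psiXb rmorphM /= !compXi !tnth_mktuple eqxx (negbTE hba) eqxx mulrC.
by rewrite psiXo // compXi tnth_mktuple (negbTE ha) (negbTE hb).
Qed.

Lemma tau_psi p : tau (psi p) = tau p.
Proof.
apply: (hom_ext (f := (tau \o psi)%FUN : {rmorphism S -> S})) => [c|i] /=.
  by rewrite !comp_mpolyC.
case: (eqVneq i a) => [->|ha].
  by rewrite psiXa rmorphD /= !compXi !tnth_mktuple eqxx (negbTE hab) addr0.
case: (eqVneq i b) => [->|hb].
  by rewrite psiXb rmorphM /= !compXi !tnth_mktuple eqxx (negbTE hab) mulr0.
by rewrite psiXo.
Qed.


Lemma tauXm (m : 'X_{1..n}) : tau 'X_[m] = if m b == 0%N then 'X_[m] else 0.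
Proof.
rewrite comp_mpolyX; case: eqP => hm.
  rewrite [RHS]mpolyXE_id; apply: eq_bigr => i _; rewrite tnth_mktuple.
  by case: eqP => [->|//]; rewrite hm !expr0.
rewrite (bigD1 b) //= tnth_mktuple eqxx expr0n.
by move/eqP/negbTE: hm => ->; rewrite mul0r.
Qed.

Lemma Xm_split (m : 'X_{1..n}) : m b != 0%N -> 'X_[m] = 'X_b * 'X_[m - mnm1 b] :> S.
Proof.
move=> hm; rewrite -mpolyXD; congr mpolyX; apply/mnmP => i.
rewrite mnmDE mnmBE mnm1E; case: eqP => [<-|_]; last by rewrite subn0.
by rewrite add1n subn1 prednK // lt0n.
Qed.

Lemma tau_dec p : exists q, p = tau p + 'X_b * q.
Proof.
elim/mpolyind: p => [|c m p _ _ [q hq]].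
  by exists 0; rewrite rmorph0 mulr0 addr0.
have [qm hqm] : exists qm, 'X_[m] = tau 'X_[m] + 'X_b * qm.
  rewrite tauXm; case: eqP => hm; first by exists 0; rewrite mulr0 addr0.
  by exists 'X_[m - mnm1 b]; rewrite add0r Xm_split //; apply/eqP.
exists (c *: qm + q); rewrite comp_mpolyD comp_mpolyZ.
rewrite {1}hqm {1}hq scalerDr scalerAr mulrDr.
by rewrite addrACA.
Qed.

Lemma psi_inj_aux k p : (msize p <= k)%N -> psi p = 0 -> p = 0.
Proof.
elim: k p => [|k IH] p hk hp.
  by apply/eqP; rewrite -msize_poly_eq0 -leqn0.
have [q hq] := tau_dec p.
have : tau p = 0 by rewrite -tau_psi hp rmorph0.
move=> ht; rewrite ht add0r in hq.
have [hq0|qn0] := eqVneq q 0; first by rewrite hq hq0 mulr0.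
have hpq : psi q = 0.
  move: hp; rewrite hq rmorphM /= psiXb => /eqP.
  rewrite !mulf_eq0 !(negbTE (mpolyXi_neq0 _ _)) /= => /eqP //.
have : (msize q <= k)%N.
  move: hk; rewrite hq msizeM ?mpolyXi_neq0 // msizeX mdeg1 /=.
  by rewrite add1n ltnS.
by move/IH/(_ hpq) => hq0; rewrite hq0 eqxx in qn0.
Qed.

Lemma psi_inj p : psi p = 0 -> p = 0.
Proof. exact: (@psi_inj_aux (msize p)). Qed.


Lemma sigXa : sig 'X_a = 'X_b.
Proof. by rewrite compXi tnth_mktuple eqxx. Qed.

Lemma psi_uniq0 x y : psi x + psi y * 'X_a = 0 -> x = 0 /\ y = 0.
Proof.
move=> h.
have h2 : psi x + psi y * 'X_b = 0.
  by rewrite -sigXa -(sig_psi x) -(sig_psi y) -rmorphM -rmorphD h rmorph0.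
have : psi y * ('X_a - 'X_b) = 0.
  have -> : psi y * ('X_a - 'X_b) = (psi x + psi y * 'X_a) - (psi x + psi y * 'X_b) by ring.
  by rewrite h h2 subrr.
move/eqP; rewrite mulf_eq0 subr_eq0; case/orP => [/eqP hy|/eqP/mpolyXi_inj hab']; last by move: hab; rewrite hab' eqxx.
have y0 := psi_inj hy; split => //.
by apply: psi_inj; move: h; rewrite hy mul0r addr0.
Qed.

Lemma psi_uniq x y x' y' : psi x + psi y * 'X_a = psi x' + psi y' * 'X_a -> x = x' /\ y = y'.
Proof.
move/eqP; rewrite -subr_eq0 => /eqP h.
have : psi (x - x') + psi (y - y') * 'X_a = 0.
  rewrite !rmorphB -h; ring.
by case/psi_uniq0 => /eqP; rewrite subr_eq0 => /eqP -> /eqP; rewrite subr_eq0 => /eqP ->.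
Qed.

Definition Mrep (g : S) := exists xy : S * S, g = psi xy.1 + psi xy.2 * 'X_a.

Lemma Mrep_add g h : Mrep g -> Mrep h -> Mrep (g + h).
Proof.
move=> [[x y] ->] [[x' y'] ->]; exists (x + x', y + y') => /=.
by rewrite !rmorphD mulrDl addrACA.
Qed.

Lemma Mrep_psi r g : Mrep g -> Mrep (psi r * g).
Proof.
move=> [[x y] ->]; exists (r * x, r * y) => /=.
by rewrite !rmorphM mulrDr mulrA.
Qed.

Lemma Mrep_Xa g : Mrep g -> Mrep ('X_a * g).
Proof.
move=> [[x y] ->]; exists (- ('X_b * y), x + 'X_a * y) => /=.
rewrite rmorphN rmorphM rmorphD rmorphM /= psiXa psiXb.
ring.
Qed.


Lemma Mrep_Xi i g : Mrep g -> Mrep ('X_i * g).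
Proof.
move=> hg; case: (eqVneq i a) => [->|ha]; first exact: Mrep_Xa.
case: (eqVneq i b) => [->|hb]; last by rewrite -psiXo //; apply: Mrep_psi.
have -> : 'X_b * g = psi 'X_a * g + psi (-1) * ('X_a * g).
  by rewrite psiXa rmorphN rmorph1; ring.
by apply: Mrep_add; apply: Mrep_psi => //; apply: Mrep_Xa.
Qed.

Lemma Mrep_all g : Mrep g.
Proof.
have M0 : Mrep 0 by exists (0, 0); rewrite /= rmorph0 mul0r addr0.
elim/mpolyind: g => [//|c m p _ _ IH]; apply: Mrep_add => //.
rewrite -mul_mpolyC -(comp_mpolyC c psi_t); apply: Mrep_psi; rewrite -[X in Mrep X]mulr1.
have P : forall x : S, x = \prod_(i < n) 'X_i ^+ m i -> forall g, Mrep g -> Mrep (x * g).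
  move=> x ->; elim/big_rec: _ => [g hg|i y _ IHy g hg]; first by rewrite mul1r.
  rewrite -mulrA; elim: (m i) => [|k IHk]; first by rewrite expr0 mul1r; apply: IHy.
  by rewrite exprS -mulrA; apply: Mrep_Xi.
apply: P; first exact: mpolyXE_id.
by exists (1, 0); rewrite /= rmorph1 rmorph0 mul0r addr0.
Qed.

Lemma Mrep_allb g : exists xy : S * S, g == psi xy.1 + psi xy.2 * 'X_a.
Proof. by have [xy h] := Mrep_all g; exists xy; apply/eqP. Qed.

Definition crep (g : S) : S * S := xchoose (Mrep_allb g).
Definition c0 g := (crep g).1.
Definition c1 g := (crep g).2.

Lemma crep_dec g : g = psi (c0 g) + psi (c1 g) * 'X_a.
Proof. exact/eqP/(xchooseP (Mrep_allb g)). Qed.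

Lemma crep_lin r g : c0 (psi r * g) = r * c0 g /\ c1 (psi r * g) = r * c1 g.
Proof.
apply: psi_uniq; rewrite -crep_dec {1}(crep_dec g) !rmorphM /=; ring.
Qed.

Lemma crep_add g h : c0 (g + h) = c0 g + c0 h /\ c1 (g + h) = c1 g + c1 h.
Proof.
apply: psi_uniq; rewrite -crep_dec {1}(crep_dec g) {1}(crep_dec h) !rmorphD /=; ring.
Qed.

Lemma crep_1 : c0 1 = 1.
Proof.
have [] := @psi_uniq (c0 1) (c1 1) 1 0 => //.
by rewrite -crep_dec rmorph1 rmorph0 mul0r addr0.
Qed.

Lemma regular_psi fs : regular_seq fs -> regular_seq (map psi fs).
Proof.
apply: (@regular_map _ _ psi 'X_a c0 c1).
- exact: crep_dec.
- by move=> r g; case: (crep_lin r g).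
- by move=> r g; case: (crep_lin r g).
- by move=> g h; case: (crep_add g h).
- by move=> g h; case: (crep_add g h).
- exact: crep_1.
Qed.


Lemma psi_monoF (F : 'X_{1..n}) : F a = 1%N -> F b = 1%N ->
  psi 'X_[set1_mnm a F] = 'X_[F].
Proof.
move=> hFa hFb; rewrite comp_mpolyX [RHS]mpolyXE_id.
have hba : b != a by rewrite eq_sym.
rewrite (bigD1 a) // [in RHS](bigD1 a) //= (bigD1 b) // [in RHS](bigD1 b) //=.
rewrite !tnth_mktuple !mnmE eqxx (negbTE hba) eqxx hFa hFb expr0 mul1r !expr1 mulrA.
congr (_ * _); apply: eq_bigr => i /andP [hib hia]; rewrite tnth_mktuple mnmE.
by rewrite (negbTE hia) (negbTE hib).
Qed.

Lemma psi_monoG (G : 'X_{1..n}) : G a = 0%N -> G b = 0%N -> psi 'X_[G] = 'X_[G].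
Proof.
move=> hGa hGb; rewrite comp_mpolyX [RHS]mpolyXE_id; apply: eq_bigr => i _.
rewrite tnth_mktuple; case: eqP => [->|_]; first by rewrite hGa !expr0.
by case: eqP => [->|//]; rewrite hGb !expr0.
Qed.

End Psi.

Section Mono.
Variables (K : fieldType) (n : nat).
Local Notation S := {mpoly K[n]}.

Lemma mono_supp (A : 'X_{1..n} -> Prop) (p : S) : mono_ideal A p ->
  forall k, k \in msupp p -> exists m, A m /\ mnm_dvd m k.
Proof.
move=> [s [h ->]]; elim: s h => [|x s IH] h k.
  by rewrite big_nil msupp0.
rewrite big_cons => /msuppD_le; rewrite mem_cat => /orP [hk|hk]; last first.
  by apply: IH hk => y ys; apply: h; rewrite inE ys orbT.
have [m [hm hx]] : exists m, A m /\ x.2 = 'X_[m] by apply: h; rewrite inE eqxx.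
move: hk; rewrite hx (perm_mem (msuppMX _ _)) => /mapP [m' _ ->].
by exists m; split => // i; rewrite mnmDE leq_addr.
Qed.

Lemma mdeg_lt (m g : 'X_{1..n}) : mnm_dvd m g -> m <> g -> (mdeg m < mdeg g)%N.
Proof.
move=> hd hne; have -> : g = (m + (g - m))%MM.
  by apply/mnmP => i; rewrite mnmDE mnmBE subnKC.
rewrite mdegD -[X in (X < _)%N]addn0 ltn_add2l lt0n mdeg_eq0.
apply/eqP => h0; apply: hne; apply/mnmP => i.
by move/mnmP: h0 => /(_ i); rewrite mnmBE mnm0E => /eqP; rewrite subn_eq0 => h; apply/eqP; rewrite eqn_leq hd.
Qed.

Lemma Xdvd (m g : 'X_{1..n}) : mnm_dvd m g -> 'X_[g] = 'X_[g - m] * 'X_[m] :> S.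
Proof.
move=> hd; rewrite -mpolyXD; congr mpolyX; apply/mnmP => i.
by rewrite mnmDE mnmBE subnK.
Qed.

Lemma min_gen_exists_aux (I : mideal K n) k (g : 'X_{1..n}) : (mdeg g <= k)%N -> I 'X_[g] ->
  exists m, min_mono_gen I m /\ mnm_dvd m g.
Proof.
elim: k g => [|k IH] g hk hg.
  exists g; split; last by move=> i.
  split => // m' hd _; apply/mnmP => i.
  move: hk; rewrite leqn0 mdeg_eq0 => /eqP hg0.
  by apply/eqP; rewrite eqn_leq hd /= hg0 mnm0E.
case: (classic (forall m', mnm_dvd m' g -> I 'X_[m'] -> m' = g)) => [hmin|hmin].
  by exists g; split => // i.
have [m' hm'0] := not_all_ex_not _ _ hmin.
have [hd hm'1] := imply_to_and _ _ hm'0.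
have [hm' hne] := imply_to_and _ _ hm'1.
have [m [hm hdm]] := IH m' (leq_trans (mdeg_lt hd hne) hk : (mdeg m' <= k)%N) hm'.
by exists m; split => // i; apply: leq_trans (hdm i) (hd i).
Qed.

Lemma min_gen_exists (I : mideal K n) (g : 'X_{1..n}) : I 'X_[g] ->
  exists m, min_mono_gen I m /\ mnm_dvd m g.
Proof. exact: min_gen_exists_aux. Qed.

End Mono.

End Helpers.
Import Helpers.
Import GRing.Theory.

Theorem lemma4p2 (K : fieldType) (n : nat) (I : mideal K n) (F : 'X_{1..n})
  (hsq : squarefree_monomial_ideal I) (hnci : is_NCI I)
  (hF : min_mono_gen I F) :
  exists G : 'X_{1..n}, min_mono_gen I G /\ G <> F /\
    exists i : 'I_n, (0 < F i)%N /\ (0 < G i)%N.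
Proof.
apply: NNPP => H.
have hcop : forall G, min_mono_gen I G -> G <> F -> forall i, F i = 0%N \/ G i = 0%N.
  move=> G hG hGF i; case: (posnP (F i)) => hFi; first by left.
  case: (posnP (G i)) => hGi; first by right.
  by exfalso; apply: H; exists G; split => //; split => //; exists i.
have [gs [hsqf hI]] := hsq.
have [hdeg [hnotCI hsupp]] := hnci.
have hFsq : squarefree_mnm F.
  have := mono_supp ((hI _).1 hF.1) (k := F); rewrite msuppX mem_seq1 eqxx.
  case=> // g [hg hgF].
  have hIg : I 'X_[g] by apply/hI; apply: spanG; exists g.
  by rewrite -(hF.2 g hgF hIg); apply: hsqf.
have hF2 := hdeg F hF.
have hF01 : forall i, F i != 0%N -> F i = 1%N.
  by move=> i; have := hFsq i; case: (F i) => [|[|]].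
case: (pickP (fun i => F i != 0%N)) => [a ha|hnone]; last first.
  have h0 : mdeg F = 0%N.
    rewrite mdegE big1 // => i _; apply/eqP; have := hnone i; rewrite /=.
    by case: eqP.
  by rewrite h0 in hF2.
case: (pickP (fun i => (i != a) && (F i != 0%N))) => [b /andP [hba hb]|hnone]; last first.
  have h1 : mdeg F = 1%N.
    rewrite mdegE (bigD1 a) //= (hF01 a ha).
    rewrite big1 ?addn0 // => i hia.
    by apply/eqP; have := hnone i; rewrite hia /=; case: eqP.
  by rewrite h1 in hF2.
have hab : a != b by rewrite eq_sym.
have hFa := hF01 a ha; have hFb := hF01 b hb.
have [fs [hreg hL]] : is_CI (ideal_set1 I a).
  by apply: hsupp; exists F; split => //; rewrite hFa.
apply: hnotCI; exists (map (comp_mpoly (@psi_t K n a b)) fs); split.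
  exact: regular_psi.
have key : forall m, min_mono_gen I m ->
    comp_mpoly (@psi_t K n a b) 'X_[set1_mnm a m] = 'X_[m].
  move=> m hm; case: (classic (m = F)) => [->|hmF]; first exact: psi_monoF.
  have hma : m a = 0%N by case: (hcop m hm hmF a) => //; rewrite hFa.
  have hmb : m b = 0%N by case: (hcop m hm hmF b) => //; rewrite hFb.
  have -> : set1_mnm a m = m.
    by apply/mnmP => i; rewrite mnmE; case: eqP => [->|].
  exact: psi_monoG.
move=> p; split.
  move=> /hI; apply: span_sub => _ [g [hg ->]].
  have hIg : I 'X_[g] by apply/hI; apply: spanG; exists g.
  have [m [hm hmg]] := min_gen_exists hIg.
  rewrite (Xdvd K hmg); apply: spanM; rewrite -key //.
  apply: (span_map (A := fun g => g \in fs)) => [f hf|]; first exact: map_f.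
  by apply/hL; apply: spanG; exists (set1_mnm a m); split => //; exists m.
move=> hp; apply/hI; move: hp; apply: span_sub => _ /mapP [f hf ->].
have : ideal_span (fun g => I g) (comp_mpoly (@psi_t K n a b) f).
  apply: (span_map (A := fun g => exists m, (exists m0, min_mono_gen I m0 /\ m = set1_mnm a m0) /\ g = 'X_[m])).
    by move=> _ [_ [[m0 [hm0 ->]] ->]]; rewrite /= key //; case: hm0.
  by apply/hL; apply: spanG.
by apply: span_sub => g /hI.
Qed.
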